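(* Let $I=\langle N,M,V\rangle$ be an ordered instance of chores and let $B\subseteq M$ be a bundle with $v_i(B)\ge\mu_i$ for some agent $i\in N$. If every agent $i'\in N\setminus\{i\}$ has an MMS partition containing a bundle $B_{i'}$ with $B\succeq B_{i'}$, then allocating $B$ to $i$ is a valid reduction.
   Context: An instance of chores $I=\langle N,M,V\rangle$ has agents $N=\{1,\dots,n\}$, chores $M=\{1,\dots,m\}$ and additive valuations $v_i$ with $v_i(\emptyset)=0$, $v_i(S)=\sum_{g\in S}v_i(\{g\})$ and $v_{ij}:=v_i(\{j\})\le 0$. It is ordered if $v_{ij}\le v_{i(j+1)}$ for all $i$ and $1\le j<m$. An allocation ($n$-partition) is an ordered $n$-tuple of pairwise disjoint, possibly empty subsets of $M$ with union $M$. The maximin share of $i$ in $I$ is $\mu_i=\mu_i^I=\max_A\min_j v_i(A_j)$ over all allocations; an MMS partition of $i$ is an allocation $A$ with $v_i(A_j)\ge\mu_i$ for all $j$. For $B,B'\subseteq M$, $B\succeq B'$ means there is an injective map $f:B'\to B$ with $f(j)\le j$ for all $j\in B'$. Removing agents $N'\subseteq N$ and items $M'\subseteq M$ is a valid reduction if the items of $M'$ can be allocated to the agents of $N'$ so that each $i'\in N'$ receives a bundle $B_{i'}$ with $v_{i'}(B_{i'})\ge\mu_{i'}^I$, and every $i\in N\setminus N'$ satisfies $\mu_i^{I'}\ge\mu_i^I$, where $I'=\langle N\setminus N', M\setminus M', V\rangle$ (valuations restricted, maximin share computed with $|N\setminus N'|$ bundles). ''Allocating $B$ to $i$ is a valid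 reduction'' means this holds with $N'=\{i\}$, $M'=B$. *)

(* Defs.v *)
From HB Require Import structures.
From mathcomp Require Import all_boot all_order all_algebra.
Set Implicit Arguments. Unset Strict Implicit. Unset Printing Implicit Defensive.
Import Order.TTheory GRing.Theory Num.Theory.
Local Open Scope ring_scope.

(* Items M = 'I_m (item j+1 in the paper is ordinal j), agents N = 'I_n.
   A valuation of an agent is u : 'I_m -> R, extended additively. *)

Definition bval (R : realDomainType) (m : nat) (u : 'I_m -> R) (S : {set 'I_m}) : R :=
  \sum_(g in S) u g.

Definition is_partition (m k : nat) (S : {set 'I_m}) (A : {ffun 'I_k -> {set 'I_m}}) : bool :=
  [forall j1 : 'I_k, forall j2 : 'I_k, (j1 != j2) ==> [disjoint A j1 & A j2]] &&
  (\bigcup_(j < k) A j == S).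

(* min_j u(A_j); the neutral element 0 is harmless since chore values are <= 0
   (and k >= 1 whenever it matters). *)
Definition pmin (R : realDomainType) (m k : nat) (u : 'I_m -> R)
    (A : {ffun 'I_k -> {set 'I_m}}) : R :=
  \big[Num.min/0]_(j < k) bval u (A j).

(* The neutral element u(S)
   is a lower bound of every partition's value (all values are <= 0), so
   it does not affect the maximum whenever a partition exists. *)
Definition mms (R : realDomainType) (m : nat) (u : 'I_m -> R) (S : {set 'I_m}) (k : nat) : R :=
  \big[Num.max/bval u S]_(A : {ffun 'I_k -> {set 'I_m}} | is_partition S A) pmin u A.

Definition is_mms_partition (R : realDomainType) (m : nat) (u : 'I_m -> R)
    (S : {set 'I_m}) (k : nat) (A : {ffun 'I_k -> {set 'I_m}}) : Prop :=
  is_partition S A /\ forall j, mms u S k <= bval u (A j).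

Arguments is_mms_partition {R m} u S k A.

Definition succeq (m : nat) (B B' : {set 'I_m}) : Prop :=
  exists f : 'I_m -> 'I_m,
    {in B' &, injective f} /\ forall j, j \in B' -> f j \in B /\ (f j <= j)%N.

Definition chores (R : realDomainType) (n m : nat) (v : 'I_n -> 'I_m -> R) : Prop :=
  forall i j, v i j <= 0.
Definition ordered (R : realDomainType) (n m : nat) (v : 'I_n -> 'I_m -> R) : Prop :=
  forall i (j j' : 'I_m), (j' = j.+1 :> nat) -> v i j <= v i j'.

Definition valid_reduction (R : realDomainType) (n m : nat) (v : 'I_n -> 'I_m -> R)
    (N' : {set 'I_n}) (M' : {set 'I_m}) : Prop :=
  (exists Bs : 'I_n -> {set 'I_m},
      (forall i1 i2, i1 \in N' -> i2 \in N' -> i1 != i2 -> [disjoint Bs i1 & Bs i2]) /\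
      \bigcup_(i' in N') Bs i' = M' /\
      (forall i', i' \in N' -> mms (v i') setT n <= bval (v i') (Bs i'))) /\
  (forall i, i \in ~: N' -> mms (v i) setT n <= mms (v i) (~: M') #|~: N'|).

(* Main.v *)
Require Import Defs.
From HB Require Import structures.
From mathcomp Require Import all_boot all_order all_algebra.
From mathcomp Require Import perm.
Import Order.TTheory GRing.Theory Num.Theory.
Local Open Scope ring_scope.

Lemma mono_ord (R : realDomainType) (n m : nat) (v : 'I_n -> 'I_m -> R) i :
  ordered v -> forall x y : 'I_m, (x <= y)%N -> v i x <= v i y.
Proof.
move=> Ho.
suff H : forall d (x y : 'I_m), val y = (val x + d)%N -> v i x <= v i y.
  by move=> x y xy; apply: (H (y - x)%N); rewrite subnKC.
elim=> [|d IH] x y.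
  by rewrite addn0 => /val_inj ->.
move=> Ey.
have zlt : (x + d < m)%N by rewrite -addnS -Ey; exact: ltnW (ltn_ord y).
apply: le_trans (IH x (Ordinal zlt) erefl) _.
by apply: Ho => /=; rewrite Ey addnS.
Qed.

Lemma card_lt (T : finType) (S S' : {set T}) z :
  z \in S -> S' \subset S :\ z -> (#|S'| < #|S|)%N.
Proof.
move=> zS sub; rewrite (cardsD1 z S) zS add1n ltnS.
exact: subset_leq_card.
Qed.

Lemma core (R : realDomainType) n m (u : 'I_m -> R) (B : {set 'I_m}) (j : 'I_n) (c : R) :
  (forall x y : 'I_m, (x <= y)%N -> u x <= u y) ->
  forall N (a : 'I_m -> 'I_n) (f : 'I_m -> 'I_m),
  (#|[set x | (a x == j) && (f x != x)]| <= N)%N ->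
  {in [pred x | a x == j] &, injective f} ->
  (forall x, a x == j -> (f x \in B) && (f x <= x)%N) ->
  (forall l, l != j -> c <= \sum_(x | a x == l) u x) ->
  exists a' : 'I_m -> 'I_n, (forall x, a' x == j -> x \in B) /\
     (forall l, l != j -> c <= \sum_(x | a' x == l) u x).
Proof.
move=> Hu; elim=> [|N IH] a f HS Hinj Hf Hv;
  (case: (pickP [pred g | (a g == j) && (g \notin B)]) => [g /andP[ag gB] | none];
   last first;
  [ exists a; split => // x ax; apply/negPn/negP => xB;
    by have := none x; rewrite /= ax xB | ]);
  have /andP[fgB fgle] := Hf g ag;
  have fgg : f g != g by apply: contraNneq gB => <-.
- have gS : g \in [set x | (a x == j) && (f x != x)] by rewrite inE ag fgg.
  by move: HS; rewrite leqn0 cards_eq0 => /eqP E; rewrite E inE in gS.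
set fg := f g in fgB fgle fgg *.
set t := tperm g fg.
have tg : t g = fg by rewrite /t tpermL.
have tfg : t fg = g by rewrite /t tpermR.
have tD : forall x, x != g -> x != fg -> t x = x.
  by move=> x xg xfg; rewrite /t tpermD // eq_sym.
have tinj : injective t by exact: perm_inj.
have fglt : fg != g := fgg.
case: (boolP (a fg == j)) => afg.
-
  have Pt : forall x, a x == j -> a (t x) == j.
    move=> x ax; case: (eqVneq x g) => [->|xg]; first by rewrite tg.
    case: (eqVneq x fg) => [->|xfg]; first by rewrite tfg.
    by rewrite tD.
  apply: (IH a (fun x => f (t x))) => //.
  + rewrite -ltnS; apply: leq_trans HS; apply: (@card_lt _ _ _ fg).
      rewrite inE afg /=; apply/negP => /eqP ffg.
      have : f fg = f g by rewrite ffg.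
      by move/Hinj => /(_ afg ag) E; rewrite E eqxx in fgg.
    apply/subsetP => x; rewrite !inE => /andP[ax fx].
    case: (eqVneq x fg) => [E|xfg]; first by rewrite E tfg eqxx in fx.
    rewrite ax /=.
    case: (eqVneq x g) => [->//|xg].
    by rewrite tD in fx.
  + move=> x y ax ay /= E.
    by apply: tinj; apply: Hinj => //; rewrite inE; apply: Pt.
  + move=> x ax; have /andP[-> le] := Hf _ (Pt _ ax); rewrite /=.
    case: (eqVneq x g) => [E|xg].
      rewrite E tg; have /andP[_ le2] := Hf _ afg.
      by rewrite E tg in le; apply: leq_trans le fgle.
    case: (eqVneq x fg) => [E|xfg]; first by rewrite E tfg.
    by rewrite !tD // in le *.
-
  apply: (IH (fun x => a (t x)) (fun x => f (t x))).
  + rewrite -ltnS; apply: leq_trans HS; apply: (@card_lt _ _ _ g).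
      by rewrite inE ag fgg.
    apply/subsetP => x; rewrite !inE => /andP[ax fx].
    case: (eqVneq x g) => [E|xg]; first by rewrite E tg (negbTE afg) in ax.
    case: (eqVneq x fg) => [E|xfg]; first by rewrite E tfg eqxx in fx.
    by rewrite !tD // in ax fx; rewrite ax fx.
  + move=> x y ax ay /= E.
    by apply: tinj; apply: Hinj.
  + move=> x ax; have /andP[-> le] := Hf _ ax; rewrite /=.
    case: (eqVneq x g) => [E|xg]; first by rewrite E tg (negbTE afg) in ax.
    case: (eqVneq x fg) => [E|xfg]; first by rewrite E tfg.
    by rewrite !tD // in le *.
  + move=> l lj; apply: le_trans (Hv l lj) _.
    rewrite (reindex_inj tinj) /=.
    apply: ler_sum => x /eqP ax.
    case: (eqVneq x fg) => [E|xfg]; first by rewrite -ax E tfg ag in lj.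
    case: (eqVneq x g) => [E|xg]; first by rewrite E tg; apply: Hu.
    by rewrite tD.
Qed.

Theorem lemma16 (R : realDomainType) (n m : nat) (v : 'I_n -> 'I_m -> R)
  (B : {set 'I_m}) (i : 'I_n) :
  chores v -> ordered v ->
  mms (v i) setT n <= bval (v i) B ->
  (forall i' : 'I_n, i' != i ->
     exists A : {ffun 'I_n -> {set 'I_m}},
       is_mms_partition (v i') setT n A /\ exists j, succeq B (A j)) ->
  valid_reduction v [set i] B.
Proof.
move=> Hch Hord Hi Hoth; split.
  exists (fun _ => B); split; [|split].
  - by move=> i1 i2; rewrite !inE => /eqP-> /eqP->; rewrite eqxx.
  - by rewrite big_set1.
  - by move=> i'; rewrite inE => /eqP->.
move=> i'; rewrite !inE => i'i.
have [A [[Apart Amms] [j [f [finj fP]]]]] := Hoth i' i'i.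
set c := mms (v i') setT n in Amms *.
have Hu := @mono_ord _ _ _ v i' Hord.
move: Apart => /andP[/forallP Hdisj /eqP Hcov].
pose a x := odflt j [pick l | x \in A l].
have aE : forall x l, (a x == l) = (x \in A l).
  move=> x l; rewrite /a; case: pickP => [l0 xl0 | none] /=.
    case: (eqVneq l0 l) => [<-//|ne]; apply/esym/negP => xl.
    have := forallP (Hdisj l0) l; rewrite ne /= => /disjointFr /(_ xl0).
    by rewrite xl.
  have : x \in [set: 'I_m] by rewrite inE.
  by rewrite -Hcov => /bigcupP [l1 _]; rewrite none.
have sumE : forall l, \sum_(x | a x == l) v i' x = bval (v i') (A l).
  by move=> l; rewrite /bval; apply: eq_bigl => x; rewrite aE.
have [a' [Ha'B Ha'v]] := @core _ _ _ _ B j c Hu _ a f (leqnn _)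
  (fun x y ax ay => finj x y ltac:(by rewrite -aE) ltac:(by rewrite -aE))
  (fun x ax => ltac:(by move: ax; rewrite aE => /fP [-> ->]))
  (fun l lj => ltac:(by rewrite sumE; apply: Amms)).
have e : #|~: [set i]| = n.-1 by rewrite cardsC1 card_ord.
pose A2 : {ffun 'I_#|~: [set i]| -> {set 'I_m}} :=
  [ffun l => [set x | (a' x == lift j (cast_ord e l)) && (x \notin B)]].
have c0 : c <= 0.
  by apply: le_trans (Amms j) _; apply: sumr_le0 => x _; apply: Hch.
have A2part : is_partition (~: B) A2.
  apply/andP; split.
    apply/forallP => l1; apply/forallP => l2; apply/implyP => l12.
    apply/pred0P => x /=; rewrite !ffunE !inE; apply/negP.
    move=> /andP[/andP[/eqP -> _] /andP[/eqP E _]].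
    by move: l12; rewrite (cast_ord_inj (lift_inj E)) eqxx.
  apply/eqP/setP => x; rewrite inE; apply/bigcupP/idP.
    by move=> [l _]; rewrite ffunE inE => /andP[].
  move=> xB; case: (unliftP j (a' x)) => [l0 E|E].
    exists (cast_ord (esym e) l0) => //.
    by rewrite ffunE inE cast_ordKV -E eqxx xB.
  by move: xB; rewrite Ha'B // E.
apply: (@le_trans _ _ (pmin (v i') A2)).
  apply: le_bigmin => // l _.
  rewrite ffunE /bval.
  have := Ha'v (lift j (cast_ord e l)) ltac:(by rewrite eq_sym neq_lift).
  rewrite (bigID (fun x => x \in B)) /= => H.
  apply: le_trans H _.
  rewrite -[X in _ <= X]add0r; apply: lerD.
    by apply: sumr_le0 => x _; apply: Hch.
  by rewrite le_eqVlt; apply/orP; left; apply/eqP; apply: eq_bigl => x; rewrite inE.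
rewrite /mms (bigD1 A2) //=.
by rewrite le_max lexx.
Qed.
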